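(* For DEMO on the weighted vertex cover problem, the search point $0^n$ is included in the population in expected time $O\big(n^3(\log n+\log W_{max})^2\big)$, where $W_{max}$ is the maximum vertex weight.
   Context: Weighted vertex cover: $G=(V,E)$, $V=\{v_1,\dots,v_n\}$, $w:V\to\mathbb{N}^+$. Search points $x\in\{0,1\}^n$; $Cost(x)=\sum_i w(v_i)x_i$; $G(x)=(V(x),E(x))$ with $V(x)=V\setminus\{v_i:x_i=1\}$, $E(x)$ = edges with no selected endpoint; $LP(x)$ = optimal value of: minimize $\sum_{v_i\in V(x)}w(v_i)y_i$ s.t. $y_i+y_j\ge1$ for $\{v_i,v_j\}\in E(x)$, $0\le y_i\le1$. $f(x)=(Cost(x),LP(x))$, $f(x)\le f(y)$ componentwise. DEMO: $\delta=\frac1{2n}$, $b_1(x)=\lceil\log_{1+\delta}(1+Cost(x))\rceil$, $b_2(x)=\lceil\log_{1+\delta}(1+LP(x))\rceil$, $b=(b_1,b_2)$. Start with uniformly random $x$, $P=\{x\}$. Each iteration: choose $x\in P$ uniformly; create $x'$ by flipping each bit independently with probability $1/n$; if some $y\in P$ satisfies ($f(y)\le f(x')$ and $f(y)\ne f(x')$) or ($b(y)=b(x')$ and $Cost(y)+2LP(y)\le Cost(x')+2LP(x')$), discard $x'$; otherwise add $x'$ and delete all other $z\in P$ with $f(x')\le f(z)$ or $b(z)=b(x')$. Time = number of iterations. *)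

(* Defs.v *)
From HB Require Import structures.
From mathcomp Require Import all_boot all_order all_algebra.
From mathcomp Require Import all_classical all_reals all_analysis.
Set Implicit Arguments. Unset Strict Implicit. Unset Printing Implicit Defensive.
Import Order.TTheory GRing.Theory Num.Theory.
Local Open Scope ring_scope.
Local Open Scope classical_set_scope.

(* Search points: bit strings of length n, x i = 1 iff vertex v_i selected. *)
Definition bits (n : nat) := {ffun 'I_n -> bool}.
Definition pop (n : nat) := {set bits n}.

Section DEMO.
Context {R : realType} (n : nat) (E : rel 'I_n) (w : 'I_n -> nat).

Definition Cost (x : bits n) : nat := (\sum_(i < n) w i * x i)%N.

(* Feasible solutions of the LP relaxation on the residual graph G(x):
   variables y_i for v_i in V(x) (values on selected vertices are irrelevant),
   0 <= y_i <= 1, and y_i + y_j >= 1 for every edge with no selected endpoint. *)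
Definition LP_feasible (x : bits n) (y : 'I_n -> R) : Prop :=
  (forall i, ~~ x i -> 0 <= y i <= 1) /\
  (forall i j, E i j -> ~~ x i -> ~~ x j -> 1 <= y i + y j).

Definition LP_obj (x : bits n) (y : 'I_n -> R) : R :=
  \sum_(i < n | ~~ x i) (w i)%:R * y i.

Definition LP (x : bits n) : R :=
  inf [set v | exists y, LP_feasible x y /\ v = LP_obj x y].

Definition f_le (x y : bits n) : bool :=
  (Cost x <= Cost y)%N && (LP x <= LP y).
Definition f_neq (x y : bits n) : bool :=
  (Cost x != Cost y) || (LP x != LP y).

Definition delta : R := (2 * n%:R)^-1.
Definition logd (a : R) : R := ln a / ln (1 + delta).
Definition b1 (x : bits n) : int := Num.ceil (logd (1 + (Cost x)%:R)).
Definition b2 (x : bits n) : int := Num.ceil (logd (1 + LP x)).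
Definition b (x : bits n) : int * int := (b1 x, b2 x).

Definition score (x : bits n) : R := (Cost x)%:R + 2 * LP x.

Definition discarded (P : pop n) (x' : bits n) : bool :=
  [exists y in P, (f_le y x' && f_neq y x') ||
                  ((b y == b x') && (score y <= score x'))].

Definition demo_step (P : pop n) (x' : bits n) : pop n :=
  if discarded P x' then P
  else x' |: [set z in P | ~~ (f_le x' z || (b z == b x'))].

Definition mut_prob (x x' : bits n) : R :=
  \prod_(i < n) (if x i == x' i then 1 - n%:R^-1 else n%:R^-1).

(* transition probability of one iteration: choose x in P uniformly,
   mutate, apply the selection step *)
Definition trans (P P' : pop n) : R :=
  \sum_(x in P) (#|P|%:R^-1 *
     \sum_(x' : bits n) mut_prob x x' * (demo_step P x' == P')%:R).

Definition init (P : pop n) : R :=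
  \sum_(x : bits n) (2 ^+ n)^-1 * (P == [set x]%SET)%:R.

Definition zero_bits : bits n := [ffun => false].

(* killed distribution: q t P = Pr[population after t iterations is P and
   0^n was not in the population at any of the times 0..t] *)
Fixpoint q (t : nat) (P : pop n) : R :=
  (zero_bits \notin P)%:R *
  match t with
  | 0 => init P
  | t'.+1 => \sum_(P0 : pop n) q t' P0 * trans P0 P
  end.

(* Pr[T > t], T = number of iterations until 0^n is in the population *)
Definition tail_prob (t : nat) : R := \sum_(P : pop n) q t P.

(* E[T] = sum_{t >= 0} Pr[T > t] (in the extended reals) *)
Definition expected_time : \bar R := (\sum_(0 <= t <oo) (tail_prob t)%:E)%E.

End DEMO.

Definition simple_graph (n : nat) (E : rel 'I_n) : Prop :=
  (forall i j, E i j = E j i) /\ (forall i, ~~ E i i).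

(* Main.v *)
Require Import Defs.
From HB Require Import structures.
From mathcomp Require Import all_boot all_order all_algebra.
From mathcomp Require Import all_classical all_reals all_analysis.
From mathcomp Require Import ring lra zify.
Import Order.TTheory GRing.Theory Num.Theory.
Local Open Scope ring_scope.

Section S.
Variable R : realType.
Variables (n : nat) (E : rel 'I_n) (w : 'I_n -> nat).
Hypothesis n_gt0 : (0 < n)%N.
Hypothesis w_gt0 : forall i, (0 < w i)%N.

Lemma delta_gt0 : 0 < delta n :> R.
Proof. by rewrite /delta invr_gt0 mulr_gt0 // ltr0n. Qed.

Lemma delta_le1 : delta n <= 1 :> R.
Proof.
rewrite /delta invf_le1 ?mulr_gt0 ?ltr0n //.
have : 1 <= n%:R :> R by rewrite ler1n.
lra.
Qed.

Definition L1 : R := ln (1 + delta n).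

Lemma L1_gt0 : 0 < L1.
Proof. apply: ln_gt0; have := delta_gt0; lra. Qed.

Definition Bz (c : nat) : int := Num.ceil (logd n (1 + c%:R : R)).

Lemma logd_ge0 c : 0 <= logd n (1 + c%:R : R).
Proof.
apply: divr_ge0; first by apply: ln_ge0; rewrite lerDl ler0n.
exact: ltW L1_gt0.
Qed.

Lemma Bz_ge0 c : 0 <= Bz c.
Proof. rewrite /Bz ceil_ge0; have := logd_ge0 c; lra. Qed.

Lemma Bz_gt0 c : (0 < c)%N -> 0 < Bz c.
Proof.
move=> c0; rewrite /Bz lt_neqAle ceil_ge0 andbC.
have h : 0 < logd n (1 + c%:R : R).
  rewrite /logd divr_gt0 ?L1_gt0 // ln_gt0 //.
  by rewrite ltrDl ltr0n.
rewrite (_ : -1 < _); last by lra.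
rewrite eq_sym /=; apply/negP => /eqP hc.
have := ceil_ge (logd n (1 + c%:R : R)); rewrite hc /=; lra.
Qed.

Lemma logd_mono c c' : (c <= c')%N -> logd n (1 + c%:R : R) <= logd n (1 + c'%:R).
Proof.
move=> h; rewrite /logd ler_pM2r ?invr_gt0 ?L1_gt0 //.
rewrite ler_ln ?posrE ?ltr_wpDr ?ler0n // lerD2l ler_nat //.
Qed.

Lemma Bz_mono c c' : (c <= c')%N -> Bz c <= Bz c'.
Proof. by move=> h; apply: le_ceil; apply: logd_mono. Qed.

Lemma Bz_step c w0 : (1 <= w0)%N -> (w0 <= c)%N -> (c <= n * w0)%N ->
  Bz (c - w0) < Bz c.
Proof.
move=> h1 h2 h3.
have key : logd n (1 + (c - w0)%:R : R) <= logd n (1 + c%:R) - 1.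
  have hL := L1_gt0.
  rewrite /logd -[X in _ - X](divff (lt0r_neq0 hL)) -mulrBl ler_pM2r ?invr_gt0 //.
  rewrite lerBrDr -lnM ?posrE; last 2 first.
  - by rewrite ltr_wpDr ?ler0n.
  - by have := delta_gt0; lra.
  rewrite ler_ln ?posrE; last 2 first.
  - apply: mulr_gt0; first by rewrite ltr_wpDr ?ler0n.
    by have := delta_gt0; lra.
  - by rewrite ltr_wpDr ?ler0n.
  rewrite natrB // /delta.
  have hn : 0 < n%:R :> R by rewrite ltr0n.
  have e1 : 1 <= w0%:R :> R by rewrite ler1n.
  have e2 : w0%:R <= c%:R :> R by rewrite ler_nat.
  have e3 : c%:R <= n%:R * w0%:R :> R by rewrite -natrM ler_nat.
  have e4 : 1 <= n%:R :> R by rewrite ler1n.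
  set d := (2 * n%:R)^-1.
  have hd : d * (2 * n%:R) = 1 by rewrite mulVf // mulf_neq0 // ?lt0r_neq0.
  have hd0 : 0 < d by rewrite invr_gt0 mulr_gt0.
  nra.
rewrite /Bz; apply: (@le_lt_trans _ _ (Num.ceil (logd n (1 + c%:R : R)) - 1)); last first.
  by rewrite ltrBlDr ltrDl.
rewrite ceil_le_int; apply: le_trans key _.
have := ceil_ge (logd n (1 + c%:R : R)).
rewrite intrD /=; lra.
Qed.


Definition U : nat := (\sum_(i < n) w i)%N.

Lemma Cost_le_U x : (Cost w x <= U)%N.
Proof. by rewrite /Cost /U; apply: leq_sum => i _; case: (x i); rewrite ?muln1 ?muln0. Qed.

Lemma logdR_mono (a a' : R) : 0 <= a -> a <= a' -> logd n (1 + a) <= logd n (1 + a').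
Proof.
move=> h0 h; rewrite /logd ler_pM2r ?invr_gt0 ?L1_gt0 //.
rewrite ler_ln ?posrE; [lra|lra|lra].
Qed.

Lemma logdR_ge0 (a : R) : 0 <= a -> 0 <= logd n (1 + a).
Proof.
move=> h; apply: divr_ge0; first by apply: ln_ge0; lra.
exact: ltW L1_gt0.
Qed.

Lemma LP_bounds x : 0 <= LP (R:=R) E w x /\ LP (R:=R) E w x <= U%:R.
Proof.
set S := [set v : R | exists y, LP_feasible E x y /\ v = LP_obj w x y]%classic.
have hS1 : S (LP_obj w x (fun=> 1)).
  exists (fun=> 1); split=> //; split=> [i _|i j _ _ _]; first by rewrite ler01 lexx.
  by rewrite lerDl ler01.
have hlb : lbound S 0.
  move=> v [y [[hy _] ->]]; rewrite /LP_obj; apply: sumr_ge0 => i hi.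
  by apply: mulr_ge0; rewrite ?ler0n //; case/andP: (hy i hi).
split; first by apply: lb_le_inf => //; exists (LP_obj w x (fun=> 1)).
apply: (@le_trans _ _ (LP_obj w x (fun=> 1))).
  by apply: (ge_inf (E:=S)) => //; exists 0.
rewrite /LP_obj /U natr_sum /=.
under eq_bigr do rewrite mulr1.
rewrite [X in _ <= X](bigID (fun i => ~~ x i)) /= lerDl sumr_ge0 // => i _.
Qed.

Definition K : int := Bz U.

Lemma b1E x : b1 (R:=R) w x = Bz (Cost w x) :> int.
Proof. by []. Qed.

Lemma b1_bounds x : 0 <= b1 (R:=R) w x <= K.
Proof. by rewrite b1E Bz_ge0 Bz_mono // Cost_le_U. Qed.

Lemma b2_bounds x : 0 <= b2 (R:=R) E w x <= K.
Proof.
have [h0 h1] := LP_bounds x.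
rewrite /b2 ceil_ge0 /K /Bz.
have h2 := @logdR_ge0 _ h0; apply/andP; split; first lra.
by apply: le_ceil; apply: logdR_mono.
Qed.

Lemma b2_mono x y : LP (R:=R) E w x <= LP E w y -> b2 (R:=R) E w x <= b2 (R:=R) E w y.
Proof.
move=> h; apply: le_ceil; apply: logdR_mono => //.
by case: (LP_bounds x).
Qed.


Definition Inv (P : pop n) : Prop :=
  P != finset.set0 /\ forall y z, y \in P -> z \in P -> y != z ->
    b (R:=R) E w y != b (R:=R) E w z /\ ~~ f_le (R:=R) E w y z.

Lemma not_disc P x' y : ~~ discarded (R:=R) E w P x' -> y \in P ->
  ~~ ((f_le (R:=R) E w y x' && f_neq (R:=R) E w y x') ||
      ((b (R:=R) E w y == b (R:=R) E w x') && (score (R:=R) E w y <= score (R:=R) E w x'))).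
Proof.
move=> hd hy; apply/negP => c; move/negP: hd; apply; apply/exists_inP; by exists y.
Qed.

Lemma Inv_step P x' : Inv P -> Inv (demo_step (R:=R) E w P x').
Proof.
move=> [hne hP]; rewrite /demo_step; case: ifPn => disc; first by split.
split; first by apply/set0Pn; exists x'; rewrite setU11.
move=> y z; rewrite !in_setU1 !inE.
have aux : forall u, u \in P -> ~~ (f_le (R:=R) E w x' u || (b (R:=R) E w u == b (R:=R) E w x')) ->
    b (R:=R) E w u != b (R:=R) E w x' /\ ~~ f_le (R:=R) E w u x'.
  move=> u hu; rewrite negb_or => /andP [h1 h2]; split => //.
  apply/negP => hle; have := @not_disc P x' u disc hu; rewrite hle /= negb_or => /andP [hneq _].
  move: hneq; rewrite /f_neq negb_or !negbK => /andP [/eqP c1 /eqP l1].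
  by move: h1; rewrite /f_le c1 l1 leqnn lexx.
case/orP => [/eqP ->|/andP [hy hy']]; case/orP => [/eqP ->|/andP [hz hz']].
- by rewrite eqxx.
- move=> _; have [h1 _] := aux z hz hz'; split; first by rewrite eq_sym.
  by move: hz'; rewrite negb_or => /andP [].
- move=> _; exact: aux y hy hy'.
- exact: hP.
Qed.

Definition Kn : nat := `|K|%N.

Lemma Kn_eq : K = Kn%:Z.
Proof. by rewrite /Kn gez0_abs // /K Bz_ge0. Qed.

Lemma card_Inv P : Inv P -> (#|P| <= Kn.*2.+1)%N.
Proof.
move=> [_ hP].
pose g (x : bits n) : 'I_(Kn.*2.+1) :=
  inord (absz (b1 (R:=R) w x - b2 (R:=R) E w x + K)).
have hg : {in P &, injective g}.
  move=> x y hx hy; rewrite /g => /(congr1 (@nat_of_ord _)).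
  have Kd := Kn_eq.
  have [hx1 hx2] := andP (b1_bounds x); have [hy1 hy2] := andP (b1_bounds y).
  have [hx3 hx4] := andP (b2_bounds x); have [hy3 hy4] := andP (b2_bounds y).
  rewrite !inordK; last 2 first.
  - rewrite ltnS; lia.
  - rewrite ltnS; lia.
  move=> heq; apply/eqP; apply: contraT => hxy.
  have e : b1 (R:=R) w x - b2 (R:=R) E w x = b1 (R:=R) w y - b2 (R:=R) E w y by lia.
  have [hb1 hf1] := hP x y hx hy hxy.
  have hyx : y != x by rewrite eq_sym.
  have [_ hf2] := hP y x hy hx hyx.
  move: hb1 hf1 hf2; rewrite /f_le /b.
  case: (leqP (Cost w x) (Cost w y)) => hc /=.
  + move=> hb1 hl _; rewrite -ltNge in hl.
    have h1 := @Bz_mono _ _ hc; have h2 := @b2_mono _ _ (ltW hl).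
    rewrite -!b1E in h1.
    have e1 : b1 (R:=R) w x = b1 (R:=R) w y by lia.
    have e2 : b2 (R:=R) E w x = b2 (R:=R) E w y by lia.
    by rewrite e1 e2 eqxx in hb1.
  + move=> hb1 _ hl; rewrite (ltnW hc) /= -ltNge in hl.
    have h1 := @Bz_mono _ _ (ltnW hc); have h2 := @b2_mono _ _ (ltW hl).
    rewrite -!b1E in h1.
    have e1 : b1 (R:=R) w x = b1 (R:=R) w y by lia.
    have e2 : b2 (R:=R) E w x = b2 (R:=R) E w y by lia.
    by rewrite e1 e2 eqxx in hb1.
rewrite -(card_in_imset hg).
by apply: leq_trans (max_card _) _; rewrite card_ord.
Qed.


Hypothesis n_gt1 : (1 < n)%N.

Definition a_ : R := 1 - n%:R^-1.
Definition mu : R := n%:R^-1 * a_ ^+ n.-1.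

Lemma ninv_ge0 : 0 <= n%:R^-1 :> R.
Proof. by rewrite invr_ge0 ler0n. Qed.

Lemma a_gt0 : 0 < a_.
Proof.
rewrite /a_ subr_gt0 invf_lt1 ?ltr0n // ltr1n //.
Qed.

Lemma mu_gt0 : 0 < mu.
Proof. by rewrite /mu mulr_gt0 ?invr_gt0 ?ltr0n // exprn_gt0 // a_gt0. Qed.

Lemma mut_ge0 (x x' : bits n) : 0 <= mut_prob (R:=R) x x'.
Proof.
apply: prodr_ge0 => i _; case: ifP => _; last exact: ninv_ge0.
exact: ltW a_gt0.
Qed.

Lemma mut_sum1 x : \sum_(x' : bits n) mut_prob (R:=R) x x' = 1.
Proof.
have := bigA_distr_bigA (fun (i : 'I_n) (bb : bool) =>
  if x i == bb then a_ else n%:R^-1 : R).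
rewrite /mut_prob /a_ => <-.
rewrite big1 // => i _; rewrite big_bool /=.
by case: (x i) => /=; rewrite ?subrK // addrC subrK.
Qed.

Definition flip (x : bits n) (i0 : 'I_n) : bits n :=
  [ffun i => if i == i0 then false else x i].

Lemma mut_flip (x : bits n) i0 : x i0 -> mut_prob (R:=R) x (flip x i0) = mu.
Proof.
move=> hx; rewrite /mut_prob (bigD1 i0) //= /flip ffunE eqxx hx /=.
rewrite (eq_bigr (fun _ => a_)); last by move=> i /negbTE hi; rewrite ffunE hi eqxx.
rewrite prodr_const cardC1 card_ord //.
Qed.

Lemma Cost_flip (x : bits n) i0 : x i0 -> Cost w x = (Cost w (flip x i0) + w i0)%N.
Proof.
move=> hx; rewrite /Cost (bigD1 i0) //= [in RHS](bigD1 i0) //= /flip ffunE eqxx hx.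
rewrite muln1 muln0 add0n addnC; congr (_ + _)%N.
by apply: eq_bigr => i /negbTE hi; rewrite ffunE hi.
Qed.


Definition xmin (P : pop n) : bits n :=
  if [pick x in P] is Some x0 then [arg min_(y < x0 in P) Cost w y] else zero_bits n.

Lemma xmin_spec {P : pop n} : P != finset.set0 ->
  xmin P \in P /\ forall y, y \in P -> (Cost w (xmin P) <= Cost w y)%N.
Proof.
move=> hne; rewrite /xmin; case: pickP => [x0 hx0|h0].
  by case: arg_minnP => // m hm hmin; split.
by case/set0Pn: hne => x hx; rewrite h0 in hx.
Qed.

Definition hP (P : pop n) : int := Bz (Cost w (xmin P)).

Lemma hP_le_K P : hP P <= K.
Proof. by apply: Bz_mono; apply: Cost_le_U. Qed.

Lemma hP_ge0 P : 0 <= hP P.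
Proof. exact: Bz_ge0. Qed.

Lemma step_mem {P : pop n} {x' : bits n} : ~~ discarded (R:=R) E w P x' -> x' \in demo_step (R:=R) E w P x'.
Proof. by move=> hd; rewrite /demo_step (negbTE hd) setU11. Qed.

Lemma hP_le_mem {P : pop n} {x : bits n} : P != finset.set0 -> x \in P -> hP P <= Bz (Cost w x).
Proof. by move=> hne hx; apply: Bz_mono; case: (xmin_spec hne) => _; apply. Qed.

Lemma hP_step P x' : P != finset.set0 -> hP (demo_step (R:=R) E w P x') <= hP P.
Proof.
move=> hne; have [hm hmin] := xmin_spec hne.
case: (boolP (discarded (R:=R) E w P x')) => hd.
  by rewrite /demo_step hd.
have hne' : demo_step (R:=R) E w P x' != finset.set0.
  by apply/set0Pn; exists x'; apply: step_mem.
have h1 := hP_le_mem hne' (step_mem hd).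
set m := xmin P.
case: (boolP (f_le (R:=R) E w x' m || (b (R:=R) E w m == b (R:=R) E w x'))) => hc.
- case/orP: hc => [/andP [hc _]|/eqP hb].
  + apply: le_trans h1 _; exact: Bz_mono.
  + apply: le_trans h1 _; case: hb => hb _.
    by rewrite /hP -/m -!b1E hb.
- apply: hP_le_mem => //.
  by rewrite /demo_step (negbTE hd) in_setU1 inE hm hc orbT.
Qed.

Lemma Cost0 x : Cost w x = 0%N -> x = zero_bits n.
Proof.
move=> /eqP; rewrite /Cost sum_nat_eq0 => /forall_inP h.
apply/ffunP => i; rewrite /zero_bits ffunE.
have := h i isT; rewrite muln_eq0; have := w_gt0 i.
by case: (w i) => [|k] /=; case: (x i).
Qed.

Lemma hP_dec P : P != finset.set0 -> zero_bits n \notin P ->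
  exists x'', mut_prob (R:=R) (xmin P) x'' = mu /\
              hP (demo_step (R:=R) E w P x'') <= hP P - 1.
Proof.
move=> hne hz; have [hm hmin] := xmin_spec hne; set m := xmin P.
have cm : (0 < Cost w m)%N.
  rewrite lt0n; apply/negP => /eqP h0; have := @Cost0 _ h0.
  by move=> e; rewrite -e hm in hz.
have [j0 hj0] : exists j, m j.
  apply/existsP; apply: contraLR cm; rewrite negb_exists => /forallP h.
  rewrite -leqNgt leqn0 /Cost; apply/eqP; apply: big1 => i _.
  by rewrite (negbTE (h i)) muln0.
case: (@arg_maxnP _ j0 (fun i => m i) w hj0) => i0 hi0 hmax.
exists (flip m i0); split; first exact: (@mut_flip _ _ hi0).
have hc := @Cost_flip _ _ hi0.
have hcost : (Cost w m <= n * w i0)%N.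
  rewrite /Cost; apply: (@leq_trans (\sum_(i < n) w i0)).
    apply: leq_sum => i _; case/boolP: (m i) => hmi; rewrite ?muln1 ?muln0 //.
    exact: hmax.
  by rewrite sum_nat_const card_ord.
have hdec : Bz (Cost w (flip m i0)) < Bz (Cost w m).
  have -> : Cost w (flip m i0) = (Cost w m - w i0)%N by rewrite hc addnK.
  apply: Bz_step; [exact: w_gt0| |exact: hcost].
  by rewrite hc leq_addl.
have hnd : ~~ discarded (R:=R) E w P (flip m i0).
  apply/exists_inP => -[y hy]; case/orP.
  - case/andP => /andP [hle _] _; have := hmin y hy.
    move: hle; rewrite hc; have := w_gt0 i0; lia.
  - case/andP => /eqP [hb _] _.
    have := @Bz_mono _ _ (hmin y hy); rewrite -!b1E hb => h.
    by have := lt_le_trans hdec h; rewrite -b1E ltxx.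
have hne' : demo_step (R:=R) E w P (flip m i0) != finset.set0.
  by apply/set0Pn; exists (flip m i0); apply: step_mem.
have h1 := hP_le_mem hne' (step_mem hnd).
have e : hP P = Bz (Cost w m) by []. rewrite e; lia.
Qed.


Definition c0 : R := (Kn.*2.+1)%:R / mu.
Definition H (P : pop n) : R := (hP P)%:~R * c0.

Lemma c0_ge0 : 0 <= c0.
Proof. by rewrite /c0 divr_ge0 ?ler0n // ltW // mu_gt0. Qed.

Lemma H_ge0 P : 0 <= H P.
Proof. by rewrite /H mulr_ge0 ?c0_ge0 // ler0z hP_ge0. Qed.

Lemma H_le P : H P <= K%:~R * c0.
Proof. by rewrite /H ler_wpM2r ?c0_ge0 // ler_int hP_le_K. Qed.

Lemma sum_ind (T : finType) (s : T) (F : T -> R) :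
  \sum_t (s == t)%:R * F t = F s.
Proof.
rewrite (bigD1 s) //= eqxx mul1r big1 ?addr0 // => t hts.
by rewrite eq_sym (negbTE hts) mul0r.
Qed.

Lemma trans_H P : \sum_(P' : pop n) trans (R:=R) E w P P' * H P' =
  #|P|%:R^-1 * \sum_(x in P) \sum_(x' : bits n) mut_prob (R:=R) x x' * H (demo_step (R:=R) E w P x').
Proof.
rewrite /trans.
under eq_bigr do rewrite big_distrl /=.
rewrite exchange_big /= big_distrr /=; apply: eq_bigr => x _.
under eq_bigr do rewrite -mulrA big_distrl /=.
rewrite -big_distrr /=; congr (_ * _).
rewrite exchange_big /=; apply: eq_bigr => x' _.
under eq_bigr do rewrite -mulrA.
by rewrite -big_distrr /= sum_ind.
Qed.

Lemma drift P : Inv P -> zero_bits n \notin P ->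
  \sum_(P' : pop n) trans (R:=R) E w P P' * H P' <= H P - 1.
Proof.
move=> hI hz; have hne := hI.1.
rewrite trans_H.
set G := fun x => \sum_(x' : bits n) mut_prob (R:=R) x x' * H (demo_step (R:=R) E w P x').
have hG : forall x, G x <= H P.
  move=> x; rewrite /G -[H P]mul1r -(mut_sum1 x) big_distrl /=.
  apply: ler_sum => x' _; apply: ler_wpM2l; first exact: mut_ge0.
  by rewrite /H ler_wpM2r ?c0_ge0 // ler_int hP_step.
have [hm _] := xmin_spec hne.
have [x'' [hmu hdec]] := @hP_dec P hne hz.
have hGm : G (xmin P) <= H P - mu * c0.
  rewrite /G (bigD1 x'') //= hmu.
  have e : H P = mu * H P + \sum_(x' | x' != x'') mut_prob (R:=R) (xmin P) x' * H P.
    have s1 := mut_sum1 (xmin P); rewrite (bigD1 x'') //= hmu in s1.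
    by rewrite -big_distrl /= -mulrDl s1 mul1r.
  rewrite [X in _ <= X - _]e.
  have h1 : H (demo_step (R:=R) E w P x'') <= H P - c0.
    rewrite /H; have -> : (hP P)%:~R * c0 - c0 = (hP P - 1)%:~R * c0.
      by rewrite intrB mulrBl mul1r.
    by rewrite ler_wpM2r ?c0_ge0 // ler_int.
  have h2 : \sum_(x' | x' != x'') mut_prob (R:=R) (xmin P) x' * H (demo_step (R:=R) E w P x')
         <= \sum_(x' | x' != x'') mut_prob (R:=R) (xmin P) x' * H P.
    apply: ler_sum => x' _; apply: ler_wpM2l; first exact: mut_ge0.
    by rewrite /H ler_wpM2r ?c0_ge0 // ler_int hP_step.
  have h3 : mu * H (demo_step (R:=R) E w P x'') <= mu * (H P - c0).
    by rewrite ler_wpM2l // ltW // mu_gt0.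
  lra.
have hsum : \sum_(x in P) G x <= \sum_(x in P) H P - mu * c0.
  rewrite (bigD1 (xmin P)) //= [X in _ <= X - _](bigD1 (xmin P)) //=.
  have : \sum_(i in P | i != xmin P) G i <= \sum_(i in P | i != xmin P) H P.
    by apply: ler_sum => x _; apply: hG.
  lra.
have hc : mu * c0 = (Kn.*2.+1)%:R.
  by rewrite /c0 mulrC -mulrA mulVf ?mulr1 // lt0r_neq0 // mu_gt0.
have hcard : (0 < #|P|)%N by rewrite card_gt0.
have hPc := @card_Inv P hI.
rewrite sumr_const in hsum.
have hp : 0 < #|P|%:R :> R by rewrite ltr0n.
rewrite -(@ler_pM2l _ #|P|%:R) // mulrA mulfV ?lt0r_neq0 // mul1r.
apply: le_trans hsum _; rewrite hc -mulr_natr mulrBr mulr1 mulrC.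
have : (Kn.*2.+1)%:R >= #|P|%:R :> R by rewrite ler_nat.
lra.
Qed.


Lemma trans_ge0 P P' : 0 <= trans (R:=R) E w P P'.
Proof.
apply: sumr_ge0 => x _; apply: mulr_ge0; first by rewrite invr_ge0 ler0n.
by apply: sumr_ge0 => x' _; apply: mulr_ge0; rewrite ?mut_ge0 ?ler0n.
Qed.

Lemma init_ge0 (P : pop n) : 0 <= init (R:=R) P.
Proof.
apply: sumr_ge0 => x _; apply: mulr_ge0; rewrite ?ler0n //.
Qed.

Lemma q_ge0 t P : 0 <= q (R:=R) E w t P.
Proof.
elim: t P => [|t IH] P /=; apply: mulr_ge0; rewrite ?ler0n ?init_ge0 //.
by apply: sumr_ge0 => P0 _; apply: mulr_ge0; rewrite ?IH ?trans_ge0.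
Qed.

Lemma sum_neq0 (I : finType) (A : pred I) (F : I -> R) :
  \sum_(i | A i) F i != 0 -> exists i, A i && (F i != 0).
Proof.
move=> h; case: (boolP [exists i, A i && (F i != 0)]) => [/existsP //|].
rewrite negb_exists => /forallP hall; move: h; rewrite big1 ?eqxx // => i hi.
by have := hall i; rewrite hi /= negbK => /eqP.
Qed.

Lemma q_inv t P : q (R:=R) E w t P != 0 -> Inv P /\ zero_bits n \notin P.
Proof.
elim: t P => [|t IH] P /=.
  case: (boolP (zero_bits n \in P)) => hz; first by rewrite mul0r eqxx.
  rewrite mul1r => /(@sum_neq0 _ predT) [x /= hx]; split => //.
  move: hx; rewrite mulf_eq0 negb_or => /andP [_]; rewrite pnatr_eq0 eqb0 negbK => /eqP ->.
  split; first by apply/set0Pn; exists x; rewrite set11.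
  by move=> y z; rewrite !inE => /eqP -> /eqP ->; rewrite eqxx.
case: (boolP (zero_bits n \in P)) => hz; first by rewrite mul0r eqxx.
rewrite mul1r => /(@sum_neq0 _ predT) [P0 /=]; rewrite mulf_eq0 negb_or => /andP [hq ht].
have [hI0 _] := IH P0 hq; split => //.
move: ht; rewrite /trans => /(@sum_neq0 _ _) [x /andP [hx]].
rewrite mulf_eq0 negb_or => /andP [_] /(@sum_neq0 _ predT) [x' /=].
rewrite mulf_eq0 negb_or => /andP [_]; rewrite pnatr_eq0 eqb0 negbK => /eqP <-.
exact: Inv_step.
Qed.

Definition Phi t : R := \sum_(P : pop n) q (R:=R) E w t P * H P.

Lemma Phi_ge0 t : 0 <= Phi t.
Proof. by apply: sumr_ge0 => P _; rewrite mulr_ge0 ?q_ge0 ?H_ge0. Qed.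

Lemma Phi_step t : Phi t.+1 <= Phi t - tail_prob (R:=R) E w t.
Proof.
rewrite /Phi /tail_prob -sumrB.
apply: (@le_trans _ _ (\sum_(P' : pop n) \sum_(P : pop n) q (R:=R) E w t P * trans (R:=R) E w P P' * H P')).
  apply: ler_sum => P' _; rewrite [q _ _ t.+1 _]/= -mulrA -big_distrl /=.
  rewrite -[X in _ <= X]mul1r ler_wpM2r //.
  - by rewrite mulr_ge0 ?H_ge0 // sumr_ge0 // => P _; rewrite mulr_ge0 ?q_ge0 ?trans_ge0.
  - by case: (_ \notin _); rewrite ?ler01 ?lexx.
rewrite exchange_big /=; apply: ler_sum => P _.
under eq_bigr do rewrite -mulrA.
rewrite -big_distrr /= -[X in _ <= _ - X]mulr1 -mulrBr.
case: (eqVneq (q (R:=R) E w t P) 0) => [->|hq]; first by rewrite !mul0r.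
have [hI hz] := @q_inv t P hq.
by rewrite ler_wpM2l ?q_ge0 // drift.
Qed.


Lemma init_sum : \sum_(P : pop n) init (R:=R) P = 1.
Proof.
rewrite /init exchange_big /=.
under eq_bigr do (under eq_bigr do rewrite eq_sym mulrC; rewrite sum_ind).
rewrite sumr_const card_ffun card_bool card_ord -[_ *+ _]mulr_natr natrX mulVf //.
Qed.

Lemma tail_ge0 t : 0 <= tail_prob (R:=R) E w t.
Proof. by apply: sumr_ge0 => P _; apply: q_ge0. Qed.

Lemma Phi0_le : Phi 0 <= K%:~R * c0.
Proof.
apply: (@le_trans _ _ (\sum_(P : pop n) init (R:=R) P * (K%:~R * c0))).
  apply: ler_sum => P _; rewrite /=.
  apply: (@le_trans _ _ (init (R:=R) P * H P)).
    rewrite ler_wpM2r ?H_ge0 //.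
    rewrite -[X in _ <= X]mul1r ler_wpM2r ?init_ge0 //.
    by case: (_ \notin _); rewrite ?ler01 ?lexx.
  by rewrite ler_wpM2l ?init_ge0 ?H_le.
by rewrite -big_distrl /= init_sum mul1r.
Qed.

Lemma partial_le T : \sum_(t < T) tail_prob (R:=R) E w t <= Phi 0 - Phi T.
Proof.
elim: T => [|T IH]; first by rewrite big_ord0 subrr.
rewrite big_ord_recr /=; have := Phi_step T; lra.
Qed.

Lemma expected_le : (expected_time (R:=R) E w <= (K%:~R * c0)%:E)%E.
Proof.
rewrite /expected_time; apply: lime_le.
  by apply: is_cvg_nneseries => k _ _; rewrite lee_fin tail_ge0.
apply: nearW => k; rewrite sumEFin lee_fin big_mkord.
apply: le_trans (partial_le k) _.
have := Phi_ge0 k; have := Phi0_le; lra.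
Qed.


Lemma L1_lb : 1 <= L1 * (4 * n%:R).
Proof.
have hn : 0 < n%:R :> R by rewrite ltr0n.
have hd := delta_gt0; have hd1 := delta_le1.
have hdn : delta n * (2 * n%:R) = 1 :> R.
  by rewrite /delta mulVf // mulf_neq0 // lt0r_neq0.
have e1 := expR_ge1Dx (- L1).
rewrite expRN /L1 lnK ?posrE in e1; last by lra.
set d := delta n in hd hd1 hdn e1 *.
set y := (1 + d)^-1 in e1.
have hy : y * (1 + d) = 1 by rewrite /y mulVf //; lra.
have hy0 : 0 < y by rewrite /y invr_gt0; lra.
rewrite -/L1.
have h1 : 1 - y <= L1 by rewrite /L1 -/d; lra.
have h2 : (1 - y) * (4 * n%:R) <= L1 * (4 * n%:R) by rewrite ler_pM2r //; lra.
have h3 : (1 - y) = y * d by nra.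
have h4 : (1 - y) * (4 * n%:R) = 2 * y.
  by rewrite h3; transitivity (2 * y * (d * (2 * n%:R))); [ring | rewrite hdn mulr1].
nra.
Qed.

Lemma mu_inv : mu^-1 <= expR 1 * n%:R.
Proof.
have hn : 0 < n%:R :> R by rewrite ltr0n.
have hmu := mu_gt0.
rewrite -[mu^-1]mul1r ler_pdivrMr //.
have ha := a_gt0.
case E1 : n n_gt1 => [//|m] hm.
rewrite /mu E1 /= /a_ E1.
have hm0 : 0 < m%:R :> R by rewrite ltr0n; case: m hm {E1}.
set a := 1 - m.+1%:R^-1.
have hab : a * (1 + m%:R^-1) = 1.
  rewrite /a -addn1 natrD; field; rewrite ?lt0r_neq0 //; lra.
have hb : (1 + m%:R^-1) ^+ m <= expR (1 : R).
  apply: (@le_trans _ _ (expR (m%:R^-1 : R) ^+ m)).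
    rewrite lerXn2r // ?nnegrE ?expR_ge1Dx ?expR_ge0 //.
  by rewrite -expRM_natl mulfV // lt0r_neq0.
have hpow : a ^+ m * (1 + m%:R^-1) ^+ m = 1 by rewrite -exprMn hab expr1n.
have hapos : 0 <= a ^+ m by rewrite exprn_ge0 // ltW // /a; rewrite -E1; exact: a_gt0.
have : a ^+ m * (1 + m%:R^-1) ^+ m <= a ^+ m * expR 1 by rewrite ler_wpM2l.
rewrite hpow => h.
have -> : expR 1 * m.+1%:R * (m.+1%:R^-1 * a ^+ m) = expR 1 * a ^+ m.
  by field; rewrite lt0r_neq0 // ltr0n.
lra.
Qed.


Lemma final_bound (W : nat) : (U <= n * W)%N -> (1 <= W)%N -> expR 1 <= n%:R :> R ->
  K%:~R * c0 <= 171 * expR 1 * n%:R ^+ 3 * (ln (n%:R : R) + ln (W%:R : R)) ^+ 2.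
Proof.
move=> hU hW he.
have hn : 0 < n%:R :> R by rewrite ltr0n.
have hn2 : 2 <= n%:R :> R by rewrite ler_nat.
have hW1 : 1 <= W%:R :> R by rewrite ler1n.
have hlnn : 1 <= ln (n%:R : R).
  rewrite -[X in X <= _](expRK 1) ler_ln ?posrE ?expR_gt0 //.
have hlnW : 0 <= ln (W%:R : R) by apply: ln_ge0.
set A := ln (n%:R : R) + ln (W%:R : R).
have hA : 1 <= A by rewrite /A; lra.
have hUr : U%:R <= n%:R * W%:R :> R by rewrite -natrM ler_nat.
have hlnU : ln (1 + U%:R : R) <= 2 * A.
  have hnW : 1 <= n%:R * W%:R :> R by rewrite -natrM ler1n muln_gt0 n_gt0.
  have hnW0 : 0 <= n%:R * W%:R :> R by lra.
  have h2 : 2 * (n%:R * W%:R) <= n%:R * n%:R * W%:R :> R.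
    by rewrite -mulrA ler_wpM2r.
  have h1 : 1 + U%:R <= n%:R * n%:R * W%:R :> R by lra.
  have hp : 0 < n%:R * n%:R * W%:R :> R by lra.
  have hp1 : 0 < 1 + U%:R :> R by rewrite ltr_wpDr ?ler0n.
  apply: (@le_trans _ _ (ln (n%:R * n%:R * W%:R : R))).
    by rewrite ler_ln ?posrE.
  have hW0 : 0 < W%:R :> R by lra.
  rewrite !lnM ?posrE ?mulr_gt0 //; rewrite /A; lra.
have hlnU0 : 0 <= ln (1 + U%:R : R) by apply: ln_ge0; rewrite lerDl ler0n.
have hL := L1_lb; have hL0 := L1_gt0.
have hx : logd n (1 + U%:R : R) <= 4 * n%:R * ln (1 + U%:R : R).
  rewrite /logd -/L1 ler_pdivrMr //.
  have : ln (1 + U%:R : R) * 1 <= ln (1 + U%:R : R) * (L1 * (4 * n%:R)).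
    by rewrite ler_wpM2l.
  by rewrite mulr1 => h; apply: (le_trans h); rewrite le_eqVlt; apply/orP; left; apply/eqP; ring.
have hk : K%:~R < logd n (1 + U%:R : R) + 1.
  by have := ceilB1_lt (logd n (1 + U%:R : R)); rewrite /K /Bz intrB /=; lra.
have hKn : (Kn%:R : R) = K%:~R by rewrite Kn_eq.
set k : R := K%:~R in hk hKn *.
have hk0 : 0 <= k by rewrite /k ler0z /K Bz_ge0.
have hnA : 1 <= n%:R * A by nra.
have hk9 : k <= 9 * (n%:R * A) by nra.
have hmu := mu_inv.
have hmu0 : 0 <= mu^-1 by rewrite invr_ge0 ltW // mu_gt0.
have hc : c0 = (2 * k + 1) * mu^-1.
  by rewrite /c0 -hKn -addn1 -muln2 natrD natrM; ring.
rewrite hc.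
have hB : 2 * k + 1 <= 19 * (n%:R * A) by nra.
apply: (@le_trans _ _ ((9 * (n%:R * A)) * ((19 * (n%:R * A)) * (expR 1 * n%:R)))).
  apply: ler_pM => //; first by apply: mulr_ge0 => //; lra.
  by apply: ler_pM => //; lra.
by rewrite le_eqVlt; apply/orP; left; apply/eqP; ring.
Qed.

End S.

Theorem lemma7 (R : realType) :
  exists (C : R) (N : nat), forall (n : nat) (E : rel 'I_n) (w : 'I_n -> nat),
    (N <= n)%N -> simple_graph E -> (forall i, (0 < w i)%N) ->
    (expected_time E w <=
       (C * n%:R ^+ 3 * (ln n%:R + ln (\max_(i < n) w i)%:R) ^+ 2)%:E)%E.
Proof.
exists (171 * expR 1), (maxn 2 `|Num.ceil (expR (1 : R))|%N).
move=> n E w hN _ hw.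
have n_gt1 : (1 < n)%N by apply: leq_trans hN; rewrite leq_maxl.
have n_gt0 : (0 < n)%N by apply: ltnW.
set W := (\max_(i < n) w i)%N.
have hU : (U n w <= n * W)%N.
  rewrite /U; apply: (@leq_trans (\sum_(i < n) W)).
    by apply: leq_sum => i _; apply: leq_bigmax.
  by rewrite sum_nat_const card_ord.
have hW : (1 <= W)%N.
  by apply: leq_trans (hw (Ordinal n_gt0)) (leq_bigmax _).
have he : expR 1 <= n%:R :> R.
  apply: (le_trans (ceil_ge (expR (1 : R)))).
  have h0 : 0 <= Num.ceil (expR (1 : R)) by rewrite ceil_ge0; have := expR_gt0 (1 : R); lra.
  rewrite -(gez0_abs h0) pmulrn ler_nat.
  by apply: leq_trans hN; rewrite leq_maxr.
apply: le_trans (@expected_le R n E w n_gt0 hw n_gt1) _.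
rewrite lee_fin.
have := @final_bound R n w n_gt0 n_gt1 W hU hW he.
by rewrite -mulrA.
Qed.
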